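(* Let $\ell$ be a Lyndon word with $|\ell|\ge2$, let $u$ be a word or $u=\infty$, and let $\ell=r_js_js_{j-1}\cdots s_1$ be the iterated standard factorization of $\ell$ with respect to $u$. Then $$r_j<\ell<s_1\le s_2\le\dots\le s_{j-1}\le s_j.$$
   Context: Words are finite sequences over a totally ordered alphabet, compared in lexicographic order (a proper prefix is smaller than the word); $\infty$ is a formal symbol with $w<\infty$ for every word $w$. A Lyndon word is a nonempty word strictly smaller than each of its proper nonempty suffixes. A word is even/odd if its length is. For a Lyndon word $\ell$ with $|\ell|\ge2$ and $u$ a word or $\infty$, the iterated standard factorization (ISF) of $\ell$ with respect to $u$ is the unique factorization $\ell=r_js_js_{j-1}\cdots s_1$, $j\ge1$, such that: (a) for every $i\in[j]$, $s_i$ is the lexicographically smallest proper nonempty suffix of $r_js_js_{j-1}\cdots s_i$; (b) for every $i\in[j-1]$, $s_i$ has even length and $s_i<u$; (c) $s_j$ has odd length or $u\le s_j$. (It is obtained by repeatedly removing the smallest proper suffix of the remaining word, which stays Lyndon, until the removed suffix fails condition (b).) *)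

(* Defs.v *)
From mathcomp Require Import all_boot all_order.
Set Implicit Arguments. Unset Strict Implicit. Unset Printing Implicit Defensive.
Import Order.TTheory.


Section Words.
Context {disp : Order.disp_t} {T : orderType disp}.

Fixpoint lexlt (s t : seq T) : bool :=
  match s, t with
  | _, [::] => false
  | [::], _ :: _ => true
  | x :: s', y :: t' => (x < y)%O || ((x == y) && lexlt s' t')
  end.

Definition lexle (s t : seq T) : bool := (s == t) || lexlt s t.

(* a word or the formal symbol infinity: [None] stands for infinity *)
Definition wordinf := option (seq T).

Definition lt_inf (w : seq T) (u : wordinf) : bool :=
  match u with None => true | Some v => lexlt w v end.

Definition le_inf (u : wordinf) (w : seq T) : bool :=
  match u with None => false | Some v => lexle v w end.

Definition lyndon (w : seq T) : Prop :=
  0 < size w /\ forall k, 0 < k < size w -> lexlt w (drop k w).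

Definition smallest_proper_suffix (s w : seq T) : Prop :=
  [/\ 0 < size s < size w, drop (size w - size s) w = s
    & forall k, 0 < k < size w -> lexle s (drop k w)].

(* Iterated standard factorization of l w.r.t. u: l = r_j s_j s_{j-1} ... s_1,
   where ss = [:: s_1; s_2; ...; s_j] (so s_i = nth [::] ss i.-1, j = size ss). *)
Definition isf (l : seq T) (u : wordinf) (r : seq T) (ss : seq (seq T)) : Prop :=
  [/\ 1 <= size ss,
      l = r ++ flatten (rev ss),
      (* (a): s_{k+1} is the smallest proper nonempty suffix of r_j s_j ... s_{k+1} *)
      (forall k, k < size ss ->
         smallest_proper_suffix (nth [::] ss k) (r ++ flatten (rev (drop k ss)))),
      (forall k, k < (size ss).-1 ->
         ~~ odd (size (nth [::] ss k)) && lt_inf (nth [::] ss k) u)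
    &
      odd (size (nth [::] ss (size ss).-1)) || le_inf u (nth [::] ss (size ss).-1)].

End Words.

(* Main.v *)
Require Import Defs.
From mathcomp Require Import all_boot all_order.
From mathcomp Require Import zify.
Import Order.TTheory.

Section Aux.
Context {disp : Order.disp_t} {T : orderType disp}.
Implicit Types s t a b c : seq T.

Lemma lexlt_irr s : lexlt s s = false.
Proof. by elim: s => //= x s ->; rewrite ltxx eqxx. Qed.

Lemma lexlt_trans s t v : lexlt s t -> lexlt t v -> lexlt s v.
Proof.
elim: s t v => [|x s IH] [|y t] [|z v] //=.
case/orP=> [xy|/andP[/eqP-> st]]; case/orP=> [yz|/andP[/eqP<- tv]].
- by rewrite (lt_trans xy yz).
- by rewrite xy.
- by rewrite yz.
- by rewrite eqxx (IH _ _ st tv) orbT.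
Qed.

Lemma lexlt_total s t : s != t -> lexlt s t || lexlt t s.
Proof.
elim: s t => [|x s IH] [|y t] //=.
case: (ltgtP x y) => //= <- H.
by apply: IH; apply: contra H => /eqP ->.
Qed.

Lemma lexlt_cat s t : t != [::] -> lexlt s (s ++ t).
Proof. by elim: s => [|x s IH] /=; [case: t | move=> H; rewrite eqxx IH ?orbT]. Qed.

Lemma lexlt_pre p s t : lexlt (p ++ s) (p ++ t) = lexlt s t.
Proof. by elim: p => //= x p ->; rewrite ltxx eqxx. Qed.

Lemma lexle_pre p s t : lexle (p ++ s) (p ++ t) = lexle s t.
Proof. by rewrite /lexle lexlt_pre; elim: p => //= x p; rewrite eqseq_cons eqxx. Qed.

Lemma lexle_lt_trans s t v : lexle s t -> lexlt t v -> lexlt s v.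
Proof. by case/orP=> [/eqP->//|]; apply: lexlt_trans. Qed.

Lemma lexle_antisym s t : lexle s t -> lexle t s -> s = t.
Proof.
case/orP=> [/eqP//|st]; case/orP=> [/eqP//|ts].
by have := lexlt_trans _ _ _ st ts; rewrite lexlt_irr.
Qed.

Lemma lexlt_split b a : lexlt b a ->
  (exists2 c, c != [::] & a = b ++ c) \/ (forall x, lexlt (b ++ x) a).
Proof.
elim: b a => [|y b IH] [|x a] //=.
  by move=> _; left; exists (x :: a).
case/orP=> [yx|/andP[/eqP-> ba]].
  by right=> z; rewrite yx.
case: (IH _ ba) => [[c c0 ->]|H]; first by left; exists c.
by right=> z; rewrite eqxx H orbT.
Qed.

Lemma sps_suffix a w p c : smallest_proper_suffix a w -> w = p ++ c ->
  0 < size p -> 0 < size c -> lexle a c.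
Proof.
case=> _ _ H E p0 c0; subst w.
have := H (size p); rewrite drop_size_cat // size_cat; apply.
by rewrite p0 -{1}(addn0 (size p)) ltn_add2l.
Qed.

Lemma key a b w1 w2 : smallest_proper_suffix a (w1 ++ a) ->
  smallest_proper_suffix b (w2 ++ b) -> w1 = w2 ++ b -> lexle a b.
Proof.
move=> Ha Hb E.
have b0 : 0 < size b by case: Hb => /andP[].
have w20 : 0 < size w2 by case: Hb => /andP[_]; rewrite size_cat -{1}(add0n (size b)) ltn_add2r.
have a0 : 0 < size a by case: Ha => /andP[].
have Hba : lexle a (b ++ a).
  apply: (sps_suffix _ _ w2 _ Ha); first by rewrite E catA.
    by []. by rewrite size_cat addn_gt0 b0.
have [/eqP->|] := boolP (a == b); first by rewrite /lexle eqxx.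
move=> /lexlt_total /orP[ab|ba]; first by rewrite /lexle ab orbT.
case: (lexlt_split _ _ ba) => [[c c0 Ea]|H].
- have Hc : lexle a c.
    apply: (sps_suffix _ _ (w1 ++ b) _ Ha); first by rewrite Ea catA.
      by rewrite size_cat addn_gt0 b0 orbT.
    by case: c c0 {Ea Hba}.
  move: Hba; rewrite Ea lexle_pre => Hcb.
  rewrite Ea in Hc.
  have := lexle_antisym _ _ Hc Hcb => /(congr1 size).
  rewrite !size_cat; lia.
- by have := lexle_lt_trans _ _ _ Hba (H a); rewrite lexlt_irr.
Qed.

End Aux.

Theorem lemma4p19 (disp : Order.disp_t) (T : orderType disp)
  (l : seq T) (u : @wordinf disp T) (r : seq T) (ss : seq (seq T)) :
  lyndon l -> 2 <= size l -> isf l u r ss ->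
  [/\ lexlt r l,
      lexlt l (nth [::] ss 0)
    & forall k, k.+1 < size ss -> lexle (nth [::] ss k) (nth [::] ss k.+1)].
Proof.
move=> [_ Ly] _ [s1 El Hs _ _].
have H0 := Hs 0 s1; rewrite drop0 -El in H0.
split.
- case: ss s1 El H0 {Hs} => // s ss' _ El [/andP[s0 _] _ _].
  rewrite El; apply: lexlt_cat; rewrite rev_cons flatten_rcons.
  move: s0 => /= s0; apply/eqP => /(congr1 size); rewrite size_cat /=; lia.
- case: H0 => /andP[s0 sl] <- _; apply: Ly.
  by rewrite subn_gt0 sl /= -{2}(subn0 (size l)) ltn_sub2l // (leq_trans _ sl).
- move=> k kS.
  have kS' : k < size ss by apply: ltnW.
  have Ha := Hs k kS'; have Hb := Hs k.+1 kS.
  rewrite (drop_nth [::] kS') rev_cons flatten_rcons catA in Ha.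
  rewrite (drop_nth [::] kS) rev_cons flatten_rcons catA in Hb.
  apply: key Ha Hb _.
  by rewrite (drop_nth [::] kS) rev_cons flatten_rcons catA.
Qed.
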